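(* Let $\mathcal{D}$ be the class of all finite digraphs and let $D\in\mathcal{D}$. The class $\mathrm{Av}(D)=\{E\in\mathcal{D}: D\not\preceq E\}$, with respect to the homomorphic image ordering $\preceq$, is well quasi-ordered if and only if $D$ is isomorphic to the complete digraph $\overrightarrow{K}_n$ for some $n\ge1$; in that case $\mathrm{Av}(D)$ is finite.
   Context: A digraph is a set $D$ with a binary relation $E(D)\subseteq D\times D$ (loops allowed). $\overrightarrow{K}_n$ is the digraph on $\{1,\dots,n\}$ with edge set $\{(i,j):1\le i,j\le n\}$ (all ordered pairs, including loops). A homomorphism maps edges to edges. Homomorphic image ordering: $A\preceq B$ iff there is a surjective homomorphism $B\to A$. Well quasi-ordered means no infinite strictly decreasing sequence and no infinite antichain; digraphs considered up to isomorphism. *)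

(* Defs.v *)
From Stdlib Require Import List.
From mathcomp Require Import all_boot.
Set Implicit Arguments. Unset Strict Implicit. Unset Printing Implicit Defensive.

(* A finite digraph: vertex set {0,..,n-1} = 'I_n with an edge relation
   (loops allowed).  Every finite digraph is isomorphic to one of these. *)
Definition digraph := {n : nat & rel 'I_n}.
Definition dsize (D : digraph) : nat := projT1 D.
Definition dedge (D : digraph) : rel 'I_(dsize D) := projT2 D.

Definition is_hom (A B : digraph) (f : 'I_(dsize A) -> 'I_(dsize B)) : Prop :=
  forall x y, dedge x y -> dedge (f x) (f y).

Definition himg_le (A B : digraph) : Prop :=
  exists f : 'I_(dsize B) -> 'I_(dsize A),
    is_hom f /\ (forall y, exists x, f x = y).

Definition himg_lt (A B : digraph) : Prop := himg_le A B /\ ~ himg_le B A.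

Definition diso (A B : digraph) : Prop :=
  exists f : 'I_(dsize A) -> 'I_(dsize B),
    bijective f /\ (forall x y, dedge x y = dedge (f x) (f y)).

Definition Kcomplete (n : nat) : digraph := existT _ n (fun _ _ => true).

Definition Av (D : digraph) (E : digraph) : Prop := ~ himg_le D E.

Definition wqo (C : digraph -> Prop) : Prop :=
  (~ exists s : nat -> digraph,
       (forall i, C (s i)) /\ (forall i, himg_lt (s i.+1) (s i))) /\
  (~ exists s : nat -> digraph,
       (forall i, C (s i)) /\ (forall i j, i <> j -> ~ himg_le (s i) (s j))).

Definition finite_upto_iso (C : digraph -> Prop) : Prop :=
  exists L : seq digraph, forall E, C E -> exists2 F, In F L & diso E F.

(* Main.v *)
Require Import Defs.
From mathcomp Require Import all_boot.
From Stdlib Require Import Classical ClassicalEpsilon.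

Lemma surj_card (T T' : finType) (f : T -> T') :
  (forall y, exists x, f x = y) -> #|T'| <= #|T|.
Proof.
move=> fs.
have H : #|T'| <= #|image f T|.
  apply: subset_leq_card; apply/subsetP => y _.
  have [x <-] := fs y; exact: image_f.
exact: leq_trans H (leq_image_card _ _).
Qed.

Lemma inj_surj_eq m n (f : 'I_m -> 'I_n) :
  injective f -> (forall y, exists x, f x = y) -> m = n.
Proof.
move=> fi fs; have := @leq_card _ _ f fi; have := @surj_card _ _ f fs.
rewrite !card_ord => h1 h2; apply/eqP; rewrite eqn_leq h1 h2 //.
Qed.

Lemma himg_trans A B C : himg_le A B -> himg_le B C -> himg_le A C.
Proof.
move=> [f [fh fs]] [g [gh gs]]; exists (f \o g); split.
  by move=> x y e; apply: fh; apply: gh.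
move=> z; have [y <-] := fs z; have [x <-] := gs y; by exists x.
Qed.

Lemma diso_le1 A B : diso A B -> himg_le B A.
Proof.
move=> [f [fb fe]]; exists f; split; first by move=> x y; rewrite fe.
by case: fb => g _ gK y; exists (g y); rewrite gK.
Qed.

Lemma diso_le2 A B : diso A B -> himg_le A B.
Proof.
move=> [f [[g fK gK] fe]]; exists g; split.
  by move=> x y; rewrite fe !gK.
by move=> y; exists (f y); rewrite fK.
Qed.


Lemma pigeon m (g : nat -> nat) : (forall i, g i < m) ->
  exists i j, i < j /\ g i = g j.
Proof.
move=> gm; apply: NNPP => H.
pose h (i : 'I_m.+1) : 'I_m := Ordinal (gm i).
have hi : injective h.
  move=> x y /(congr1 val) /= e; apply: val_inj => /=.
  case: (ltngtP x y) => // c; exfalso; apply: H.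
    by exists x, y.
  by exists y, x.
by have := @leq_card _ _ h hi; rewrite !card_ord ltnn.
Qed.

Lemma finite_pigeon (C : digraph -> Prop) (s : nat -> digraph) :
  finite_upto_iso C -> (forall i, C (s i)) ->
  exists i j, i < j /\ himg_le (s i) (s j) /\ himg_le (s j) (s i).
Proof.
move=> [L HL] Cs.
have H : forall i, exists k, k < length L /\ diso (s i) (List.nth k L (s 0)).
  move=> i; have [F FL iF] := HL _ (Cs i).
  have [k [kl kF]] := List.In_nth L F (s 0) FL.
  exists k; split; first by apply/ltP.
  by rewrite kF.
pose g i := proj1_sig (constructive_indefinite_description _ (H i)).
have gP i : g i < length L /\ diso (s i) (List.nth (g i) L (s 0)).
  exact: proj2_sig (constructive_indefinite_description _ (H i)).
have [i [j [ij e]]] := @pigeon _ g (fun i => proj1 (gP i)).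
exists i, j; split => //.
have [_ Di] := gP i; have [_ Dj] := gP j; rewrite e in Di.
split; apply: himg_trans.
- exact: diso_le2 Di.
- exact: diso_le1 Dj.
- exact: diso_le2 Dj.
- exact: diso_le1 Di.
Qed.

Lemma finite_wqo C : finite_upto_iso C -> wqo C.
Proof.
move=> FC; split.
  move=> [s [Cs lt]].
  have [i [j [ij [le1 le2]]]] := @finite_pigeon C s FC Cs.
  have chain : forall k, himg_le (s (i.+1 + k)) (s i.+1).
    elim=> [|k IH]; first by rewrite addn0; exists id; split => // y; exists y.
    apply: himg_trans IH; rewrite addnS; exact: (proj1 (lt _)).
  apply: (proj2 (lt i)); apply: himg_trans le1 _.
  by have := chain (j - i.+1); rewrite subnKC.
move=> [s [Cs ac]].
have [i [j [ij [le1 le2]]]] := @finite_pigeon C s FC Cs.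
apply: (ac i j) => //; move=> e; by rewrite e ltnn in ij.
Qed.

Lemma memIn (T : eqType) (x : T) (s : seq T) : x \in s -> List.In x s.
Proof.
elim: s => //= a s IH; rewrite in_cons => /orP [/eqP ->|h]; by [left | right; apply: IH].
Qed.

Lemma small_finite n : finite_upto_iso (fun E => dsize E < n).
Proof.
exists (List.flat_map (fun k => List.map (fun S : {set 'I_k * 'I_k} =>
   existT (fun m => rel 'I_m) k (fun x y => (x, y) \in S)) (enum {set 'I_k * 'I_k}))
   (iota 0 n)).
move=> [k r] /= kn.
exists (existT (fun m => rel 'I_m) k (fun x y => (x, y) \in [set p | r p.1 p.2])).
  apply/List.in_flat_map; exists k; split.
    by apply: memIn; rewrite mem_iota.
  apply/List.in_map_iff; exists [set p | r p.1 p.2]; split => //.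
  by apply: memIn; rewrite mem_enum.
exists id; split; first exact: inj_card_bij.
by move=> x y /=; rewrite inE.
Qed.

Lemma Kc_av n D E : 1 <= n -> diso D (Kcomplete n) -> Av D E -> dsize E < n.
Proof.
move=> n1 [f [fb fe]] AE; rewrite ltnNge; apply/negP => nE; apply: AE.
have eD : dsize D = n.
  have := bij_eq_card fb; by rewrite !card_ord.
have D1 : 0 < dsize D by rewrite eD.
pose y0 : 'I_(dsize D) := Ordinal D1.
exists (fun x => insubd y0 (val x)); split.
  by move=> x y _; rewrite fe.
move=> y.
have yE : y < dsize E by rewrite (leq_trans (ltn_ord y)) // eD.
exists (Ordinal yE); apply: val_inj => /=; by rewrite insubdK // unfold_in.
Qed.

Definition Kminus (m : nat) : digraph := existT (fun n => rel 'I_n) m (fun x y => x != y).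
Definition Hpath (m : nat) : digraph :=
  existT (fun n => rel 'I_n) m (fun x y => val y != (val x).+1).

Lemma Kminus_ac a b : himg_le (Kminus a) (Kminus b) -> a = b.
Proof.
move=> [f [fh fs]]; symmetry; apply: (@inj_surj_eq _ _ f) => // x y e.
apply: contraTeq isT => xy.
have := fh x y xy; by rewrite /= e eqxx.
Qed.

Lemma Hpath_ac a b : 2 <= a -> himg_le (Hpath a) (Hpath b) -> a = b.
Proof.
move=> a2 [f [fh fs]]; symmetry; apply: (@inj_surj_eq _ _ f) => // p q e.
have nh : forall u v, ~~ dedge (D := Hpath a) (f u) (f v) -> val v = (val u).+1.
  move=> u v nd; apply/eqP; apply: contraNT nd => h; exact: fh.
case: (ltnP (f p).+1 a) => c.
  have [b0 fb0] := fs (Ordinal c).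
  have h1 : val b0 = (val p).+1 by apply: nh; rewrite fb0 /= eqxx.
  have h2 : val b0 = (val q).+1 by apply: nh; rewrite -e fb0 /= eqxx.
  by apply: val_inj; apply/eqP; rewrite -eqSS -h1 -h2.
have fp0 : 0 < f p.
  by rewrite lt0n; apply/eqP => h; move: (leq_trans a2 c); rewrite h.
have c' : (f p).-1 < a by rewrite (leq_ltn_trans (leq_pred _)).
have [b0 fb0] := fs (Ordinal c').
have h1 : val p = (val b0).+1 by apply: nh; rewrite fb0 /= prednK // eqxx.
have h2 : val q = (val b0).+1 by apply: nh; rewrite fb0 -e /= prednK // eqxx.
by apply: val_inj; rewrite h1 h2.
Qed.

Lemma Kminus_av D (x y : 'I_(dsize D)) m : x != y -> ~~ dedge x y -> Av D (Kminus m).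
Proof.
move=> xy nxy [f [fh fs]].
have [a fa] := fs x; have [b fb] := fs y.
have ab : a != b by apply: contraNneq xy => e; rewrite -fa -fb e.
by have := fh a b ab; rewrite fa fb (negbTE nxy).
Qed.

Lemma Hpath_av D (x : 'I_(dsize D)) m : ~~ dedge x x -> Av D (Hpath m).
Proof.
move=> nx [f [fh fs]]; have [a fa] := fs x.
have : dedge (D := Hpath m) a a by rewrite /= (ltn_eqF (ltnSn _)).
by move/fh; rewrite fa (negbTE nx).
Qed.

Lemma Hpath_av0 D m : dsize D = 0 -> 0 < m -> Av D (Hpath m).
Proof.
move=> e m0 [f _]; case: (f (Ordinal m0)) => v; by rewrite e.
Qed.

Lemma finite_sub (C C' : digraph -> Prop) :
  finite_upto_iso C' -> (forall E, C E -> C' E) -> finite_upto_iso C.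
Proof. move=> [L HL] s; exists L => E /s; exact: HL. Qed.

Theorem theorem4p2 (D : digraph) :
  (wqo (Av D) <-> exists n, 1 <= n /\ diso D (Kcomplete n)) /\
  ((exists n, 1 <= n /\ diso D (Kcomplete n)) -> finite_upto_iso (Av D)).
Proof.
have fin : (exists n, 1 <= n /\ diso D (Kcomplete n)) -> finite_upto_iso (Av D).
  move=> [n [n1 iso]]; apply: (@finite_sub _ (fun E => is_true (dsize E < n)) (small_finite n)) => E.
  exact: Kc_av.
split => //; split; last by move/fin; exact: finite_wqo.
move=> [_ W]; apply: NNPP => Hn.
have Hac : forall s : nat -> digraph, (forall i, Av D (s i)) ->
    (forall i j, himg_le (s i) (s j) -> i = j) -> False.
  move=> s As ac; apply: W; exists s; split => // i j ij /ac; exact: ij.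
case: (classic (exists x y : 'I_(dsize D), x != y /\ ~~ dedge x y)).
  move=> [x [y [xy nxy]]]; apply: (Hac Kminus).
    by move=> i; exact: Kminus_av xy nxy.
  by move=> i j; exact: Kminus_ac.
move=> H1.
have Hh : (forall i, Av D (Hpath i.+2)) -> False.
  move=> As; apply: (Hac (fun i => Hpath i.+2)) => // i j /Hpath_ac h.
  by case: (h isT).

case: (classic (exists x : 'I_(dsize D), ~~ dedge x x)).
  move=> [x nx]; apply: Hh => i; exact: Hpath_av nx.
move=> H2.
case: (posnP (dsize D)) => [e|pos].
  apply: Hh => i; exact: Hpath_av0 e _.
apply: Hn; exists (dsize D); split => //.
exists id; split; first by exists id.
move=> x y /=; apply/idP; apply: NNPP => h.
case: (eqVneq x y) => [exy|nxy].
  by subst y; apply: H2; exists x; apply/negP.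
by apply: H1; exists x, y; split => //; apply/negP.
Qed.
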